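(* Let $E$ be a finite set with $|E|=n\ge1$, and consider the Boolean lattice of all subsets of $E$ with rank $\mathrm{rk}(F)=|F|$. Then, summing over chains of subsets that end at $E$, \[d_n(x)=\sum_{\varnothing=F_0\subsetneq F_1\subsetneq\cdots\subsetneq F_m=E}\ \prod_{i=1}^m\frac{x\bigl(1-x^{\mathrm{rk}(F_i)-\mathrm{rk}(F_{i-1})-1}\bigr)}{1-x},\] the sum over all $m\ge1$ and all such chains, and \[xA_n(x)=\sum_{F_0\subsetneq F_1\subsetneq\cdots\subsetneq F_m=E}\frac{x(1-x^{\mathrm{rk}(F_0)})}{1-x}\prod_{i=1}^m\frac{x\bigl(1-x^{\mathrm{rk}(F_i)-\mathrm{rk}(F_{i-1})-1}\bigr)}{1-x},\] the sum over all $m\ge0$ and all chains of subsets $F_0\subsetneq\cdots\subsetneq F_m=E$ (with $F_0$ arbitrary).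
   Context: Eulerian polynomials: $A_n(x)=\sum_{\sigma\in\mathfrak{S}_n}x^{\mathrm{des}(\sigma)}$ for $n\ge1$, with $\mathrm{des}(\sigma)=|\{i\in[n-1]:\sigma_i>\sigma_{i+1}\}|$. Derangement polynomials: $d_n(x)=\sum_{\sigma}x^{\mathrm{exc}(\sigma)}$ for $n\ge1$, the sum over fixed-point-free $\sigma\in\mathfrak{S}_n$, with $\mathrm{exc}(\sigma)=|\{i:\sigma_i>i\}|$. An empty product equals $1$. *)

(* Defs.v *)
From mathcomp Require Import all_boot all_order all_algebra all_fingroup.
Set Implicit Arguments. Unset Strict Implicit. Unset Printing Implicit Defensive.
Import GRing.Theory.
Local Open Scope ring_scope.

Definition des (n : nat) (s : 'S_n) : nat :=
  #|[set i : 'I_n | [exists j : 'I_n, (val j == (val i).+1) && (s j < s i)%N]]|.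

Definition exc (n : nat) (s : 'S_n) : nat := #|[set i : 'I_n | (i < s i)%N]|.

Definition eulerianA (R : ringType) (n : nat) (x : R) : R :=
  \sum_(s : 'S_n) x ^+ des s.

Definition derangementD (R : ringType) (n : nat) (x : R) : R :=
  \sum_(s : 'S_n | [forall i, s i != i]) x ^+ exc s.

Definition wt (R : fieldType) (x : R) (k : nat) : R :=
  x * (1 - x ^+ (k - 1)%N) / (1 - x).

Definition strict_chain (E : finType) (m : nat) (F : {ffun 'I_m.+1 -> {set E}}) : bool :=
  [forall i : 'I_m, F (widen_ord (leqnSn m) i) \proper F (lift ord0 i)].

Definition chain_wt (R : fieldType) (x : R) (E : finType) (m : nat)
    (F : {ffun 'I_m.+1 -> {set E}}) : R :=
  \prod_(i < m) wt x (#|F (lift ord0 i)| - #|F (widen_ord (leqnSn m) i)|)%N.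

(* Main.v *)
Require Import Defs.
From mathcomp Require Import all_boot all_order all_algebra all_fingroup.
From mathcomp Require Import zify ring.
Import GRing.Theory.

Module M1.
Set Implicit Arguments. Unset Strict Implicit. Unset Printing Implicit Defensive.

Lemma big_lift_perm (T : Type) (idx : T) (op : Monoid.com_law idx) n
   (p q : 'I_n.+1) (F : 'S_n.+1 -> T) :
  \big[op/idx]_(s : 'S_n.+1 | s p == q) F s = \big[op/idx]_(s : 'S_n) F (lift_perm p q s).
Proof.
rewrite (reindex (lift_perm p q)); last first.
  pose ulsf i (s : 'S_n.+1) k := odflt k (unlift (s i) (s (lift i k))).
  have ulsfK i (s : 'S_n.+1) k: lift (s i) (ulsf i s k) = s (lift i k).
    rewrite /ulsf; have:= neq_lift i k.
    by rewrite -(can_eq (permK s)) => /unlift_some[] ? ? ->.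
  have inj_ulsf: injective (ulsf p _).
    move=> s; apply: can_inj (ulsf (s p) s^-1%g) _ => k'.
    by rewrite {1}/ulsf ulsfK !permK liftK.
  exists (fun s => perm (inj_ulsf s)) => [s _ | s].
    by apply/permP=> k'; rewrite permE /ulsf lift_perm_lift lift_perm_id liftK.
  move/(s _ =P _) => si0; apply/permP=> k.
  case: (unliftP p k) => [k'|] ->; rewrite ?lift_perm_id //.
  by rewrite lift_perm_lift -si0 permE ulsfK.
by apply: eq_bigl => s; rewrite lift_perm_id eqxx.
Qed.

Lemma cardsum (T : finType) (P : pred T) : #|[set i | P i]| = \sum_i (P i : nat).
Proof.
rewrite -sum1_card big_mkcond; apply: eq_bigr => i _; rewrite inE; by case: (P i).
Qed.

Lemma sum_lift n (p : 'I_n.+1) (G : 'I_n.+1 -> nat) :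
  \sum_(t : 'I_n.+1) G t = G p + \sum_(k : 'I_n) G (lift p k).
Proof. by rewrite (bigD1_ord p) //. Qed.

Lemma ltn_lift n (p : 'I_n.+1) (a b : 'I_n) : (lift p a < lift p b) = (a < b).
Proof. by rewrite /= /bump; case: (leqP p a); case: (leqP p b); lia. Qed.

Definition fixn n (s : 'S_n) : nat := #|[set i : 'I_n | s i == i]|.
Definition wexc n (s : 'S_n) : nat := #|[set i : 'I_n | i <= s i]|.

Lemma exc_liftpp n (p : 'I_n.+1) (s : 'S_n) : exc (lift_perm p p s) = exc s.
Proof.
rewrite /exc !cardsum (sum_lift p) lift_perm_id ltnn add0n.
by apply: eq_bigr => k _; rewrite lift_perm_lift ltn_lift.
Qed.

Lemma fixn_liftpp n (p : 'I_n.+1) (s : 'S_n) : fixn (lift_perm p p s) = (fixn s).+1.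
Proof.
rewrite /fixn !cardsum (sum_lift p) lift_perm_id eqxx add1n; congr _.+1.
by apply: eq_bigr => k _; rewrite lift_perm_lift (inj_eq (@lift_inj _ p)).
Qed.

Lemma wexc_liftmm n (s : 'S_n) : wexc (lift_perm ord_max ord_max s) = (wexc s).+1.
Proof.
rewrite /wexc !cardsum (sum_lift ord_max) lift_perm_id leqnn add1n; congr _.+1.
by apply: eq_bigr => k _; rewrite lift_perm_lift !lift_max.
Qed.

End M1.
Import M1.

Module M2.
Set Implicit Arguments. Unset Strict Implicit. Unset Printing Implicit Defensive.

Lemma sum_two n (i j : 'I_n) (G : 'I_n -> nat) : i != j ->
  \sum_t G t = G i + G j + \sum_(t | (t != i) && (t != j)) G t.
Proof.
move=> ij; rewrite (bigD1 i) //= (bigD1 j) /=; last by rewrite eq_sym.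
by rewrite addnA; congr (_ + _); apply: eq_bigl => t; rewrite andbC.
Qed.

Lemma exc_tperm n (i : 'I_n.+1) (r : 'S_n.+1) : r ord_max = ord_max ->
  exc (tperm i ord_max * r) = exc r + ((i != ord_max) && ~~ (i < r i)).
Proof.
move=> rm; have [->|im] := eqVneq i ord_max.
  by rewrite tperm1 mul1g addn0.
rewrite /exc !cardsum (sum_two _ im) (sum_two _ im) !permM tpermL tpermR rm.
have -> : (@ord_max n < r i)%N = false by rewrite ltnNge leq_ord.
have hi : (i < n)%N by move: im; rewrite -(inj_eq val_inj) /= ltn_neqAle -ltnS ltn_ord andbT.
rewrite ltnn hi /=.
have -> : \sum_(t | (t != i) && (t != ord_max)) (t < (tperm i ord_max * r)%g t)%N
   = \sum_(t | (t != i) && (t != ord_max)) (t < r t)%N.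
  by apply: eq_bigr => t /andP[ti tm]; rewrite permM tpermD // eq_sym.
by case: (i < r i)%N => /=; lia.
Qed.

Lemma wexc_tperm n (i : 'I_n.+1) (r : 'S_n.+1) : r ord_max = ord_max ->
  wexc (tperm i ord_max * r) + ((i != ord_max) && (i <= r i)) = wexc r.
Proof.
move=> rm; have [->|im] := eqVneq i ord_max.
  by rewrite tperm1 mul1g addn0.
rewrite /wexc !cardsum (sum_two _ im) (sum_two _ im) !permM tpermL tpermR rm.
have -> : (@ord_max n <= r i)%N = false.
  apply/negbTE; rewrite -ltnNge ltn_neqAle -ltnS ltn_ord andbT.
  apply/eqP => /val_inj; rewrite -{1}rm => /perm_inj; exact/eqP.
have hi : (i <= n)%N by rewrite -ltnS.
rewrite leqnn hi /=.
have -> : \sum_(t | (t != i) && (t != ord_max)) (t <= (tperm i ord_max * r)%g t)%N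
   = \sum_(t | (t != i) && (t != ord_max)) (t <= r t)%N.
  by apply: eq_bigr => t /andP[ti tm]; rewrite permM tpermD // eq_sym.
by case: (i <= r i)%N => /=; lia.
Qed.

End M2.
Import M2.

Module M3.
Set Implicit Arguments. Unset Strict Implicit. Unset Printing Implicit Defensive.

Section B.
Variables (T : Type) (idx : T) (op : Monoid.com_law idx).

Lemma bigB1 n (F : 'S_n.+1 -> T) :
  \big[op/idx]_(t : 'S_n.+1) F t =
  \big[op/idx]_(s : 'S_n) \big[op/idx]_(i : 'I_n.+1)
      F (tperm i ord_max * lift_perm ord_max ord_max s)%g.
Proof.
rewrite (partition_big (fun t : 'S_n.+1 => t^-1%g ord_max) predT) //=.
rewrite exchange_big /=; apply: eq_bigr => i _.
have -> : \big[op/idx]_(t : 'S_n.+1 | t^-1%g ord_max == i) F t =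
          \big[op/idx]_(t : 'S_n.+1 | t i == ord_max) F t.
  apply: eq_bigl => t; apply/eqP/eqP => [<-|<-]; by rewrite ?permKV ?permK.
rewrite (reindex_inj (mulgI (tperm i ord_max))) /=.
rewrite -(big_lift_perm op ord_max ord_max (fun r => F (tperm i ord_max * r)%g)).
by apply: eq_bigl => r; rewrite permM tpermL.
Qed.

Lemma bigB2 n (F : 'S_n.+1 -> T) :
  \big[op/idx]_(t : 'S_n.+1) F t =
  \big[op/idx]_(s : 'S_n) \big[op/idx]_(p : 'I_n.+1) F (lift_perm p ord_max s).
Proof.
rewrite (partition_big (fun t : 'S_n.+1 => t^-1%g ord_max) predT) //=.
rewrite exchange_big /=; apply: eq_bigr => p _.
have -> : \big[op/idx]_(t : 'S_n.+1 | t^-1%g ord_max == p) F t =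
          \big[op/idx]_(t : 'S_n.+1 | t p == ord_max) F t.
  apply: eq_bigl => t; apply/eqP/eqP => [<-|<-]; by rewrite ?permKV ?permK.
exact: big_lift_perm.
Qed.
End B.

Section G.
Variable R : nmodType.
Local Open Scope ring_scope.

Lemma G1 (I : finType) (F : nat -> R) s (b : I -> bool) k :
  (\sum_i (~~ b i : nat))%N = k ->
  \sum_i F (s + b i)%N = F s *+ k + F s.+1 *+ (#|I| - k).
Proof.
move=> hk.
have tot : (\sum_i (~~ b i : nat) + \sum_i (b i : nat))%N = #|I|.
  rewrite -big_split /= -sum1_card; apply: eq_bigr => i _; by case: (b i).
rewrite -tot -hk addKn -!sumrMnr -big_split /=.
by apply: eq_bigr => i _; case: (b i); rewrite /= ?addn0 ?addn1 ?mulr0n ?mulr1n ?addr0 ?add0r.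
Qed.

Lemma exc_rec n (F : nat -> R) :
  \sum_(t : 'S_n.+1) F (exc t) =
  \sum_(s : 'S_n) (F (exc s) *+ (exc s).+1 + F (exc s).+1 *+ (n - exc s)).
Proof.
rewrite bigB1; apply: eq_bigr => s _.
under eq_bigr do rewrite exc_tperm ?lift_perm_id // exc_liftpp.
rewrite (G1 _ _ (k := (exc s).+1)) ?card_ord ?subSS //.
rewrite (sum_lift ord_max) eqxx add1n; congr _.+1.
rewrite /exc cardsum; apply: eq_bigr => k _.
by rewrite lift_perm_lift ltn_lift negb_and lift_eqF /= negbK.
Qed.
End G.

Section W.
Variable R : nmodType.
Local Open Scope ring_scope.

Lemma wexc_rec n (F : nat -> R) :
  \sum_(t : 'S_n.+1) F (wexc t) =
  \sum_(s : 'S_n) (F (wexc s) *+ (wexc s) + F (wexc s).+1 *+ (n.+1 - wexc s)).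
Proof.
rewrite bigB1; apply: eq_bigr => s _.
have e : forall i : 'I_n.+1, wexc (tperm i ord_max * lift_perm ord_max ord_max s)%g
   = (wexc s + ~~ ((i != ord_max) && (i <= lift_perm ord_max ord_max s i)))%N.
  move=> i; have := wexc_tperm i (lift_perm_id ord_max ord_max s).
  rewrite wexc_liftmm; case: (_ && _) => /=; lia.
under eq_bigr do rewrite e.
rewrite (G1 _ _ (k := wexc s)) ?card_ord //.
rewrite (sum_lift ord_max) eqxx /= add0n.
rewrite /wexc cardsum; apply: eq_bigr => k _.
by rewrite lift_perm_lift !lift_max lift_eqF /= negbK /bump (leqNgt n) ltn_ord.
Qed.

Lemma wexc_exc n (F : nat -> R) :
  \sum_(s : 'S_n.+1) F (wexc s) = \sum_(s : 'S_n.+1) F (exc s).+1.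
Proof.
elim: n F => [|n IH] F.
  apply: eq_bigr => s _.
  have h : forall i : 'I_1, i = ord0 by move=> i; apply: val_inj; case: i => [[]].
  rewrite /wexc /exc !cardsum !big_ord1 (h (s ord0)) /=.
  done.
rewrite wexc_rec (IH (fun w => F w *+ w + F w.+1 *+ (n.+2 - w)%N)).
rewrite (@exc_rec _ _ (fun e => F e.+1)); apply: eq_bigr => s _.
by rewrite subSS.
Qed.
End W.

End M3.
Import M3.

Module M4.
Set Implicit Arguments. Unset Strict Implicit. Unset Printing Implicit Defensive.

Definition fp n (s : 'S_n) (k : nat) : nat :=
  oapp (fun i : 'I_n => val (s i)) 0%N (insub k).

Lemma fpE n (s : 'S_n) (i : 'I_n) : fp s i = s i.
Proof. by rewrite /fp valK. Qed.

Lemma fp_out n (s : 'S_n) k : (n <= k)%N -> fp s k = 0%N.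
Proof. by move=> h; rewrite /fp insubN // -leqNgt. Qed.

Lemma fp_lt n (s : 'S_n) k : (k < n)%N -> (fp s k < n)%N.
Proof. by move=> h; rewrite -[k]/(val (Ordinal h)) fpE. Qed.

Definition dd (f : nat -> nat) m := (\sum_(i < m.-1) (f i.+1 < f i))%N.

Lemma dd_rec f m : dd f m.+1 = (dd f m + ((0 < m) && (f m < f m.-1)))%N.
Proof.
case: m => [|m]; first by rewrite /dd big_ord0.
by rewrite /dd /= big_ord_recr.
Qed.

Lemma dd_eq f g m : (forall k, (k < m)%N -> f k = g k) -> dd f m = dd g m.
Proof.
move=> h; apply: eq_bigr => i _; have hi := ltn_ord i.
rewrite !h //; lia.
Qed.

Lemma ins_dd f g M p : (forall k, (k < p)%N -> g k = f k) -> g p = M ->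
  (forall k, (p < k)%N -> g k = f k.-1) ->
  forall m, (p <= m)%N -> (forall k, (k < m)%N -> (f k < M)%N) ->
  (dd g m.+1 + [&& 0 < p, p < m & f p < f p.-1] = dd f m + (p < m))%N.
Proof.
move=> h1 h2 h3; elim=> [|m IH] pm0 hf.
  have -> : p = 0%N by lia.
  by rewrite /dd /= !big_ord0.
have r1 := dd_rec g m.+1; rewrite /= in r1.
have [pm|pm] : (p <= m)%N \/ p = m.+1 by lia.
- have IHm := IH pm (fun k km => hf k (ltnW km)).
  have r2 := dd_rec f m.
  rewrite h3 // in r1.
  have [pm'|pm'] : (p < m)%N \/ p = m by lia.
  + rewrite h3 // in r1.
    have m0 : (0 < m)%N by lia.
    rewrite m0 /= in r2.
    have e1 : [&& 0 < p, p < m.+1 & f p < f p.-1] = [&& 0 < p, p < m & f p < f p.-1].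
      by rewrite pm' (_ : (p < m.+1)%N) //; lia.
    rewrite e1 (_ : (p < m.+1)%N); last by lia.
    rewrite pm' /= in IHm.
    rewrite pm' /=; move: IHm r1 r2; case: ((0 < p) && (f p < f p.-1)); case: (f m < f m.-1)%N => /=; lia.
  + subst p; rewrite h2 (hf m) // in r1.
    rewrite ltnn andbF addn0 in IHm.
    rewrite r1 ltnSn /= r2 IHm; case: (_ && _) => /=; lia.
- subst p; rewrite h2 h1 // in r1.
  have hM : (M < f m)%N = false.
    by apply/negbTE; rewrite -leqNgt; apply: ltnW; exact: hf.
  rewrite hM in r1; rewrite r1 ltnn andbF !addn0 (dd_eq (g := f)) //.
Qed.

Lemma des_dd n (s : 'S_n) : des s = dd (fp s) n.
Proof.
rewrite /des cardsum; case: n s => [|n] s; first by rewrite /dd !big_ord0.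
rewrite big_ord_recr /= /dd /=.
have -> : [exists j : 'I_n.+1, (val j == n.+1) && (s j < s ord_max)%N] = false.
  by apply/negbTE/existsP => [[j /andP[/eqP hj _]]]; have := ltn_ord j; rewrite -[nat_of_ord j]/(val j) hj ltnn.
rewrite /= addn0; apply: eq_bigr => i _.
have hi : (i.+1 < n.+1)%N by rewrite ltnS.
congr (nat_of_bool _); apply/idP/idP.
  case/existsP => j /andP[/eqP hj hlt].
  by rewrite -[i.+1]hj -[nat_of_ord i]/(val (widen_ord (leqnSn n) i)) !fpE.
move=> h; apply/existsP; exists (Ordinal hi); rewrite eqxx /=.
move: h; rewrite -[i.+1]/(val (Ordinal hi)) -[nat_of_ord i]/(val (widen_ord (leqnSn n) i)) !fpE.
done.
Qed.

Lemma fp_liftm n (s : 'S_n) (p : 'I_n.+1) k :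
  fp (lift_perm p ord_max s) k =
  if (k < p)%N then fp s k else if k == p then n else fp s k.-1.
Proof.
have pn := leq_ord p.
case: ltngtP => [kp|pk|kp].
- have kn : (k < n)%N by lia.
  have ek : k = lift p (Ordinal kn) by rewrite /= /bump leqNgt kp.
  by rewrite {1}ek fpE lift_perm_lift lift_max -[k]/(val (Ordinal kn)) fpE.
- case: (leqP k n) => kn.
    have kn' : (k.-1 < n)%N by lia.
    have ek : k = lift p (Ordinal kn').
      have h' : (p <= k.-1)%N by lia. 
      by rewrite /= /bump h' add1n; lia.
    by rewrite {1}ek fpE lift_perm_lift lift_max -[k.-1]/(val (Ordinal kn')) fpE.
  by rewrite !fp_out //; lia.
- by rewrite kp fpE lift_perm_id.
Qed.

Lemma des_lift n (s : 'S_n) (p : 'I_n.+1) :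
  des (lift_perm p ord_max s) =
  (des s + ((p < n) && ~~ ((0 < p) && (fp s p < fp s p.-1))))%N.
Proof.
rewrite !des_dd.
have pn := leq_ord p.
have h := @ins_dd (fp s) (fp (lift_perm p ord_max s)) n p.
have h1 : forall k, (k < p)%N -> fp (lift_perm p ord_max s) k = fp s k.
  by move=> k kp; rewrite fp_liftm kp.
have h2 : fp (lift_perm p ord_max s) p = n by rewrite fp_liftm ltnn eqxx.
have h3 : forall k, (p < k)%N -> fp (lift_perm p ord_max s) k = fp s k.-1.
  by move=> k kp; rewrite fp_liftm ltnNge ltnW //= gtn_eqF.
have := h h1 h2 h3 n pn (fun k kn => fp_lt s kn).
case: (p < n)%N; case: (0 < p)%N; case: (fp s p < fp s p.-1)%N => /=; lia.
Qed.

Lemma des_cnt n (s : 'S_n) :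
  (\sum_(p : 'I_n.+1) ~~ ((p < n) && ~~ ((0 < p) && (fp s p < fp s p.-1))))%N
  = (des s).+1.
Proof.
rewrite big_ord_recr /= ltnn /= addn1 des_dd; congr _.+1.
case: n s => [|n] s; first by rewrite big_ord0 /dd big_ord0.
rewrite big_ord_recl /= /dd /=; apply: eq_bigr => i _.
by rewrite /bump leq0n add1n add0n ltnS ltn_ord /= negbK.
Qed.

Section D.
Variable R : nmodType.
Local Open Scope ring_scope.

Lemma des_rec n (F : nat -> R) :
  \sum_(t : 'S_n.+1) F (des t) =
  \sum_(s : 'S_n) (F (des s) *+ (des s).+1 + F (des s).+1 *+ (n - des s)).
Proof.
rewrite bigB2; apply: eq_bigr => s _.
under eq_bigr do rewrite des_lift.
by rewrite (G1 _ _ (des_cnt s)) card_ord subSS.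
Qed.

Lemma exc_des n (F : nat -> R) :
  \sum_(s : 'S_n) F (exc s) = \sum_(s : 'S_n) F (des s).
Proof.
elim: n F => [|n IH] F.
  apply: eq_bigr => s _; rewrite /exc /des !cardsum !big_ord0 //.
rewrite exc_rec des_rec.
exact: (IH (fun e => F e *+ e.+1 + F e.+1 *+ (n - e)%N)).
Qed.
End D.

End M4.
Import M4.

Module M5.
Set Implicit Arguments. Unset Strict Implicit. Unset Printing Implicit Defensive.

Definition Nc n j k := (\sum_(s : 'S_n) ((fixn s == j) && (exc s == k)))%N.

Lemma Nc_rec n j k : (j.+1 * Nc n.+1 j.+1 k = n.+1 * Nc n j k)%N.
Proof.
rewrite /Nc big_distrr /=.
transitivity (\sum_(s : 'S_n.+1) ((fixn s == j.+1) && (exc s == k)) * fixn s)%N.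
  by apply: eq_bigr => s _; case: eqP => [->|] //=; rewrite mulnC.
transitivity (\sum_(p : 'I_n.+1) \sum_(s : 'S_n.+1 | s p == p)
                 ((fixn s == j.+1) && (exc s == k)))%N; last first.
  rewrite -[n.+1 in RHS]card_ord -sum1_card big_distrl /=.
  apply: eq_bigr => p _; rewrite mul1n big_lift_perm.
  by apply: eq_bigr => s _; rewrite fixn_liftpp exc_liftpp eqSS.
under [RHS]eq_bigr do rewrite big_mkcond /=.
rewrite exchange_big /=; apply: eq_bigr => s _.
rewrite /fixn cardsum big_distrr /=.
by apply: eq_bigr => p _; case: (s p == p); rewrite ?muln1 ?muln0.
Qed.

Lemma fixn_le n (s : 'S_n) : (fixn s <= n)%N.
Proof. by rewrite /fixn -[X in (_ <= X)%N]card_ord max_card. Qed.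
Lemma exc_le n (s : 'S_n) : (exc s <= n)%N.
Proof. by rewrite /exc -[X in (_ <= X)%N]card_ord max_card. Qed.

Lemma Nc_bin j n k : Nc n j k = ('C(n, j) * Nc (n - j) 0 k)%N.
Proof.
elim: j n => [|j IH] n; first by rewrite bin0 subn0 mul1n.
case: n => [|n].
  rewrite bin0n /= mul0n /Nc big1 // => s _.
  by have := fixn_le s; case: (fixn s) => //.
apply/eqP; rewrite -(eqn_pmul2l (ltn0Sn j)) Nc_rec IH subSS mulnA.
by rewrite mul_bin_diag mulnA.
Qed.

Section S.
Variable R : nmodType.
Local Open Scope ring_scope.

Lemma sum_ord_eq B a (X : nat -> R) : (a < B)%N ->
  \sum_(j < B) X j *+ (a == j) = X a.
Proof.
move=> H; rewrite (bigD1 (Ordinal H)) //= eqxx mulr1n big1 ?addr0 // => j hj.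
rewrite (_ : (a == j) = false) ?mulr0n //; apply/negbTE; apply: contra hj => /eqP e.
by apply/eqP/val_inj.
Qed.

Lemma sum_fix_exc n B (G : nat -> nat -> R) : (n < B)%N ->
  \sum_(s : 'S_n) G (fixn s) (exc s) =
  \sum_(j < B) \sum_(k < B) G j k *+ Nc n j k.
Proof.
move=> nB.
under [RHS]eq_bigr do under eq_bigr do rewrite /Nc -sumrMnr.
under [RHS]eq_bigr do rewrite exchange_big /=.
rewrite exchange_big /=; apply: eq_bigr => s _.
under eq_bigr do under eq_bigr do rewrite -mulnb mulnC mulrnA.
under eq_bigr do rewrite sumrMnl.
rewrite (sum_ord_eq (fun i => \sum_(i0 < B) G i i0 *+ (exc s == i0))); last exact: leq_ltn_trans (fixn_le s) nB.
by rewrite (sum_ord_eq (G (fixn s))) //; exact: leq_ltn_trans (exc_le s) nB.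
Qed.
End S.

End M5.
Import M5.

Module M6.
Set Implicit Arguments. Unset Strict Implicit. Unset Printing Implicit Defensive.
Local Open Scope ring_scope.

Section C.
Variables (R : fieldType) (x : R).
Hypothesis hx : x != 1.

Lemma hx1 : 1 - x != 0.
Proof. by rewrite subr_eq0 eq_sym. Qed.

Fixpoint cc (m r : nat) : R :=
  match m with
  | 0 => (r == 0)%:R
  | m'.+1 => \sum_(k < r) 'C(r, k.+1)%:R * wt x k.+1 * cc m' (r - k.+1)
  end.

Lemma cc_gt m r : (r < m)%N -> cc m r = 0.
Proof.
elim: m r => [|m IH] r //= h.
by apply: big1 => k _; rewrite IH ?mulr0 //; have := ltn_ord k; lia.
Qed.

Definition TT r := \sum_(m < r.+1) cc m r.

Lemma TT_ext r B : (r < B)%N -> \sum_(m < B) cc m r = TT r.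
Proof.
move=> h; rewrite /TT -!(big_mkord xpredT (fun m => cc m r)).
rewrite (big_cat_nat _ (n := r.+1)) //=.
have -> : \sum_(r.+1 <= i < B) cc i r = 0.
  rewrite big_nat_cond big1 // => m /andP[/andP[hm _] _]; exact: cc_gt.
by rewrite addr0.
Qed.

Lemma wtS k : (1 - x) * wt x k.+1 = x - x ^+ k.+1.
Proof.
rewrite /wt subSS subn0 exprS; field; exact: hx1.
Qed.

Lemma TT_rec n : (0 < n)%N ->
  (1 - x) * TT n = \sum_(k < n) 'C(n, k.+1)%:R * (x - x ^+ k.+1) * TT (n - k.+1).
Proof.
move=> n0; rewrite /TT big_ord_recl /= (_ : (n == 0%N) = false); last by lia.
rewrite add0r.
rewrite exchange_big big_distrr /=; apply: eq_bigr => k _.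
under eq_bigr do rewrite add0n.
rewrite -big_distrr /= TT_ext; last by lia.
by rewrite -(wtS k) /TT; ring.
Qed.

Lemma jsum_eq (u : nat -> R) n :
  \sum_(j < n.+1) 'C(n, j)%:R * (x ^+ j - x) * u (n - j)%N =
  (1 - x) * u n - \sum_(k < n) 'C(n, k.+1)%:R * (x - x ^+ k.+1) * u (n - k.+1)%N.
Proof.
rewrite big_ord_recl bin0 subn0 expr0 mul1r -sumrN; congr (_ + _).
by apply: eq_bigr => k _; rewrite /bump /=; ring.
Qed.

Lemma rec_uniq (u v : nat -> R) :
  u 0%N = v 0%N ->
  (forall n, (0 < n)%N -> \sum_(j < n.+1) 'C(n, j)%:R * (x ^+ j - x) * u (n - j)%N = 0) ->
  (forall n, (0 < n)%N -> \sum_(j < n.+1) 'C(n, j)%:R * (x ^+ j - x) * v (n - j)%N = 0) ->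
  forall n, u n = v n.
Proof.
move=> h0 hu hv n; elim: n {-2}n (leqnn n) => [|N IH] n hn.
  by have -> : n = 0%N by lia.
case: n hn => [|n] hn //.
have := hu n.+1 isT; have := hv n.+1 isT; rewrite !jsum_eq.
have -> : \sum_(k < n.+1) 'C(n.+1, k.+1)%:R * (x - x ^+ k.+1) * u (n.+1 - k.+1)%N
   = \sum_(k < n.+1) 'C(n.+1, k.+1)%:R * (x - x ^+ k.+1) * v (n.+1 - k.+1)%N.
  by apply: eq_bigr => k _; rewrite IH //; lia.
move/eqP; rewrite subr_eq0 => /eqP e1 /eqP; rewrite subr_eq0 -e1 => /eqP.
by move/(mulfI hx1).
Qed.

Lemma TT_j n : (0 < n)%N ->
  \sum_(j < n.+1) 'C(n, j)%:R * (x ^+ j - x) * TT (n - j)%N = 0.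
Proof. by move=> n0; rewrite jsum_eq TT_rec // subrr. Qed.

Lemma TT0 : TT 0 = 1.
Proof. by rewrite /TT big_ord1. Qed.
End C.

End M6.
Import M6.

Module M7.
Set Implicit Arguments. Unset Strict Implicit. Unset Printing Implicit Defensive.
Local Open Scope ring_scope.

Lemma wexc_fe n (s : 'S_n) : wexc s = (fixn s + exc s)%N.
Proof.
rewrite /wexc /fixn /exc !cardsum -big_split /=; apply: eq_bigr => i _.
rewrite leq_eqVlt -(inj_eq val_inj) /= eq_sym.
by case: ltngtP.
Qed.

Section P.
Variables (R : fieldType) (x : R).

Lemma fix0 n (s : 'S_n) : [forall i, s i != i] = (fixn s == 0%N).
Proof.
rewrite /fixn cardsum sum_nat_eq0; apply: eq_forallb => i.
by case: (s i == i).
Qed.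

Lemma Dsum n B : (n < B)%N -> derangementD n x = \sum_(k < B) x ^+ k *+ Nc n 0 k.
Proof.
move=> nB; rewrite /derangementD.
under eq_bigl do rewrite fix0.
rewrite big_mkcond /=.
transitivity (\sum_(s : 'S_n) (fun j k => x ^+ k *+ (j == 0%N)) (fixn s) (exc s)).
  by apply: eq_bigr => s _ /=; case: (fixn s == 0%N); rewrite ?mulr1n ?mulr0n.
rewrite (sum_fix_exc (fun j k => x ^+ k *+ (j == 0%N)) nB).
transitivity (\sum_(j < B) (\sum_(k < B) x ^+ k *+ Nc n j k) *+ (0%N == j)).
  apply: eq_bigr => j _; rewrite -sumrMnl; apply: eq_bigr => k _.
  by rewrite mulrnAC eq_sym.
by rewrite (sum_ord_eq (fun j => \sum_(k < B) x ^+ k *+ Nc n j k)) //; exact: leq_ltn_trans (leq0n n) nB.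
Qed.

Lemma Qsum n (y : R) : \sum_(s : 'S_n) (fun j k => x ^+ k * y ^+ j) (fixn s) (exc s) =
  \sum_(j < n.+1) 'C(n, j)%:R * y ^+ j * derangementD (n - j) x.
Proof.
rewrite (sum_fix_exc (fun j k => x ^+ k * y ^+ j) (ltnSn n)); apply: eq_bigr => j _.
rewrite (Dsum (B := n.+1)); last by have := ltn_ord j; lia.
rewrite mulr_sumr /=; apply: eq_bigr => k _.
by rewrite Nc_bin; ring.
Qed.

Lemma D_j n : (0 < n)%N ->
  \sum_(j < n.+1) 'C(n, j)%:R * (x ^+ j - x) * derangementD (n - j) x = 0.
Proof.
case: n => [|n] // _.
have e : \sum_(j < n.+2) 'C(n.+1, j)%:R * (x ^+ j - x) * derangementD (n.+1 - j) x =
   \sum_(j < n.+2) 'C(n.+1, j)%:R * x ^+ j * derangementD (n.+1 - j) x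
   - x * \sum_(j < n.+2) 'C(n.+1, j)%:R * 1 ^+ j * derangementD (n.+1 - j) x.
  rewrite mulr_sumr -sumrB; apply: eq_bigr => j _; rewrite expr1n; ring.
rewrite e -!Qsum /=.
have -> : \sum_(s : 'S_n.+1) x ^+ exc s * x ^+ fixn s = \sum_(s : 'S_n.+1) x ^+ wexc s.
  by apply: eq_bigr => s _; rewrite wexc_fe exprD mulrC.
rewrite (@wexc_exc _ _ (fun w => x ^+ w)) mulr_sumr /=; apply/eqP; rewrite subr_eq0; apply/eqP.
by apply: eq_bigr => s _; rewrite expr1n mulr1 exprS.
Qed.

Lemma A_exc n : eulerianA n x = \sum_(s : 'S_n) x ^+ exc s.
Proof. by rewrite /eulerianA (@exc_des _ _ (fun w => x ^+ w)). Qed.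

Lemma xA n : (0 < n)%N ->
  x * eulerianA n x = \sum_(j < n.+1) 'C(n, j)%:R * x ^+ j * derangementD (n - j) x.
Proof.
case: n => [|n] // _; rewrite -Qsum A_exc mulr_sumr /=.
transitivity (\sum_(s : 'S_n.+1) x ^+ (exc s).+1).
  by apply: eq_bigr => s _; rewrite exprS.
rewrite -(@wexc_exc _ _ (fun w => x ^+ w)); apply: eq_bigr => s _.
by rewrite wexc_fe exprD mulrC.
Qed.

Lemma D0 : derangementD 0 x = 1.
Proof.
rewrite (Dsum (B := 1)) // big_ord1 /Nc.
rewrite (eq_bigr (fun _ => 1%N)) ?sum1_card ?card_Sn //.
move=> s _; rewrite /fixn /exc !cardsum !big_ord0 //.
Qed.

End P.

End M7.
Import M7.

Module M8.
Set Implicit Arguments. Unset Strict Implicit. Unset Printing Implicit Defensive.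
Local Open Scope ring_scope.

Section Ch.
Variables (R : fieldType) (x : R) (E : finType).

Definition tl m (F : {ffun 'I_m.+2 -> {set E}}) : {ffun 'I_m.+1 -> {set E}} :=
  [ffun i => F (lift ord0 i)].
Definition cns m (a : {set E}) (G : {ffun 'I_m.+1 -> {set E}}) : {ffun 'I_m.+2 -> {set E}} :=
  [ffun i => if unlift ord0 i is Some j then G j else a].

Lemma wl m (i : 'I_m) :
  widen_ord (leqnSn m.+1) (lift ord0 i) = lift ord0 (widen_ord (leqnSn m) i).
Proof. by apply: val_inj. Qed.

Lemma sc_split m (F : {ffun 'I_m.+2 -> {set E}}) :
  strict_chain F = (F ord0 \proper tl F ord0) && strict_chain (tl F).
Proof.
have e0 : widen_ord (leqnSn m.+1) ord0 = ord0 by apply: val_inj.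
rewrite /strict_chain; apply/forallP/andP.
  move=> h; split.
    by have := h ord0; rewrite ffunE e0.
  by apply/forallP => i; have := h (lift ord0 i); rewrite !ffunE wl.
case=> h0 /forallP h i; case: (unliftP ord0 i) => [j ->|->].
  by have := h j; rewrite !ffunE wl.
by move: h0; rewrite ffunE e0.
Qed.

Lemma cw_split m (F : {ffun 'I_m.+2 -> {set E}}) :
  chain_wt x F = wt x (#|tl F ord0| - #|F ord0|) * chain_wt x (tl F).
Proof.
rewrite /chain_wt big_ord_recl; congr (_ * _).
  by rewrite ffunE; congr (wt x (_ - #|F _|)); exact: val_inj.
by apply: eq_bigr => i _; rewrite !ffunE wl.
Qed.

Lemma max_tl m (F : {ffun 'I_m.+2 -> {set E}}) : F ord_max = tl F ord_max.
Proof. by rewrite ffunE; congr (F _); apply: val_inj. Qed.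

Lemma tl_cns m a (G : {ffun 'I_m.+1 -> {set E}}) : tl (cns a G) = G.
Proof. by apply/ffunP => i; rewrite !ffunE liftK. Qed.

Lemma cns0 m a (G : {ffun 'I_m.+1 -> {set E}}) : cns a G ord0 = a.
Proof. by rewrite ffunE unlift_none. Qed.

Definition cs (m : nat) (A : {set E}) : R :=
  \sum_(F : {ffun 'I_m.+1 -> {set E}} |
          [&& strict_chain F, F ord0 == A & F ord_max == setT]) chain_wt x F.

Lemma cs_rec m A :
  cs m.+1 A = \sum_(B : {set E} | A \proper B) wt x (#|B| - #|A|) * cs m B.
Proof.
rewrite /cs (reindex_onto (@cns m A) (@tl m)) /=; last first.
  move=> F /and3P[_ /eqP F0 _]; apply/ffunP => i; rewrite ffunE.
  by case: unliftP => [j ->|->]; rewrite ?ffunE.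
rewrite (partition_big (fun G : {ffun 'I_m.+1 -> {set E}} => G ord0)
            (fun B => A \proper B)) /=; last first.
  by move=> G; rewrite sc_split tl_cns cns0 => /andP[/and3P[/andP[]]].
apply: eq_bigr => B hB; rewrite mulr_sumr.
apply: eq_big => [G|G /andP[_ /eqP G0]].
  rewrite sc_split tl_cns cns0 eqxx max_tl tl_cns.
  case: (eqVneq (G ord0) B) => [->|]; rewrite ?hB ?andbF ?andbT //=.
  by rewrite eqxx andbT.
by rewrite cw_split tl_cns cns0 G0.
Qed.

Lemma cs0 A : cs 0 A = (A == setT)%:R.
Proof.
rewrite /cs; have [->|nA] := eqVneq A setT.
  rewrite (big_pred1 [ffun=> setT]) /chain_wt ?big_ord0 //.
  move=> F /=; rewrite /strict_chain.
  have -> : [forall i : 'I_0, F (widen_ord (leqnSn 0) i) \proper F (lift ord0 i)].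
    by apply/forallP => -[].
  have -> : (ord_max : 'I_1) = ord0 by apply: val_inj.
  rewrite andbb /=; apply/eqP/eqP => [h|->]; last by rewrite ffunE.
  by apply/ffunP => i; rewrite ffunE -h; congr (F _); apply: val_inj; case: i => -[].
rewrite big_pred0 // => F.
have -> : (ord_max : 'I_1) = ord0 by apply: val_inj.
by case: (eqVneq (F ord0) A) => [->|]; rewrite ?(negbTE nA) ?andbF // ?andbF.
Qed.
End Ch.

End M8.
Import M8.

Module M9.
Set Implicit Arguments. Unset Strict Implicit. Unset Printing Implicit Defensive.
Local Open Scope ring_scope.

Section Ch2.
Variables (R : fieldType) (x : R) (E : finType).

Lemma sum_sub (C : {set E}) (g : nat -> R) :
  \sum_(D : {set E} | D \subset C) g #|D| = \sum_(k < #|C|.+1) 'C(#|C|, k)%:R * g k.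
Proof.
transitivity (\sum_(D : {set E} | D \subset C) \sum_(k < #|C|.+1) g k *+ (#|D| == k)).
  apply: eq_bigr => D hD; rewrite sum_ord_eq //; rewrite ltnS; exact: subset_leq_card.
rewrite exchange_big /=; apply: eq_bigr => k _.
rewrite sumrMnr -cards_draws cardsum big_mkcond /= mulr_natl.
congr (g k *+ _); apply: eq_bigr => D _; by case: (D \subset C).
Qed.

Lemma sum_sup (A : {set E}) (g : nat -> R) :
  \sum_(B : {set E} | A \subset B) g #|B :\: A| =
  \sum_(D : {set E} | D \subset ~: A) g #|D|.
Proof.
rewrite (reindex_onto (fun D => A :|: D) (fun B => B :\: A)) /=; last first.
  move=> B /subsetP h; apply/setP => y; rewrite !inE.
  by case: (boolP (y \in A)) (h y) => //= _ ->.
apply: eq_big => [D|D hD].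
  rewrite subsetUl /=; apply/eqP/idP => [<-|h].
    by apply/subsetP => y; rewrite !inE => /andP[].
  apply/setP => y; rewrite !inE; have := subsetP h y; rewrite !inE.
  by case: (y \in A); case: (y \in D) => // ->.
by move/andP: hD => [_ /eqP ->].
Qed.

Lemma setC_eqT (A : {set E}) : (~: A == set0) = (A == setT).
Proof.
apply/eqP/eqP => h; first by rewrite -[A]setCK h setC0.
by rewrite h setCT.
Qed.

Lemma cs_cc m (A : {set E}) : cs x m A = cc x m #|~: A|.
Proof.
elim: m A => [|m IH] A; first by rewrite cs0 /= cards_eq0 setC_eqT.
rewrite cs_rec /=.
under eq_bigr do rewrite IH.
set r := #|~: A|.
pose g k := (k != 0%N)%:R * (wt x k * cc x m (r - k)).
transitivity (\sum_(B : {set E} | A \subset B) g #|B :\: A|).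
  rewrite [RHS]big_mkcond [LHS]big_mkcond /=; apply: eq_bigr => B _.
  rewrite properEcard; case: (boolP (A \subset B)) => //= hAB.
  rewrite /g cardsDS //.
  have h1 := cardsC A; have h2 := cardsC B; have h3 := subset_leq_card hAB.
  case: ltnP => h4.
    rewrite (_ : ((#|B| - #|A|)%N != 0%N)) ?mul1r; last by lia.
    by congr (_ * cc x m _); rewrite /r; lia.
  by rewrite (_ : (#|B| - #|A|)%N = 0%N) ?mul0r //; lia.
rewrite sum_sup sum_sub big_ord_recl /g /= mul0r mulr0 add0r.
by apply: eq_bigr => k _; rewrite /bump /= add1n mul1r mulrA.
Qed.
End Ch2.

End M9.
Import M9.

Unset Implicit Arguments. Set Strict Implicit.
Local Open Scope ring_scope.

Theorem lemma3p20 (R : fieldType) (E : finType) (x : R) (hx : x != 1)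
    (hn : (0 < #|E|)%N) :
  derangementD #|E| x =
    \sum_(1 <= m < #|E|.+1)
      \sum_(F : {ffun 'I_m.+1 -> {set E}} |
              [&& strict_chain F, F ord0 == set0 & F ord_max == setT])
        chain_wt x F
  /\
  x * eulerianA #|E| x =
    \sum_(0 <= m < #|E|.+1)
      \sum_(F : {ffun 'I_m.+1 -> {set E}} |
              strict_chain F && (F ord_max == setT))
        (x * (1 - x ^+ #|F ord0|) / (1 - x)) * chain_wt x F.
Proof.
have DT : forall n, derangementD n x = TT x n.
  apply: (rec_uniq hx); first by rewrite D0 TT0.
    by move=> n n0; exact: D_j.
  by move=> n n0; exact: TT_j.
set n := #|E|.
split.
  transitivity (\sum_(1 <= m < n.+1) cs x m (set0 : {set E})); last by [].
  under eq_bigr do rewrite cs_cc setC0 cardsT.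
  rewrite DT /TT -(big_mkord xpredT (fun m => cc x m n)) big_ltn //=.
  by rewrite (_ : (n == 0%N) = false) ?add0r //; lia.
rewrite xA //.
transitivity (\sum_(j < n.+1) 'C(n, j)%:R * (x * (1 - x ^+ j) / (1 - x)) * TT x (n - j)).
  apply/eqP; rewrite -subr_eq0 -sumrB.
  rewrite (eq_bigr (fun j : 'I_n.+1 => 'C(n,j)%:R * (x ^+ j - x) * TT x (n - j) / (1 - x))).
    by rewrite -mulr_suml TT_j // mul0r.
  move=> j _; rewrite DT; field; exact: hx1.
rewrite big_mkord.
transitivity (\sum_(m < n.+1) \sum_(A : {set E}) (x * (1 - x ^+ #|A|) / (1 - x)) * cs x m A); last first.
  apply: eq_bigr => m _.
  rewrite (partition_big (fun F : {ffun 'I_m.+1 -> {set E}} => F ord0) predT) //=.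
  apply: eq_bigr => A _; rewrite /cs mulr_sumr.
  apply: eq_big => [F|F /and3P[_ /eqP -> _]] //.
  by case: (strict_chain F); case: (F ord0 == A); case: (F ord_max == setT).
rewrite [RHS]exchange_big /=.
transitivity (\sum_(A : {set E}) x * (1 - x ^+ #|A|) / (1 - x) * TT x (n - #|A|)); last first.
  apply: eq_bigr => A _; rewrite -mulr_sumr; congr (_ * _).
  under eq_bigr do rewrite cs_cc.
  have h1 := cardsC A; rewrite TT_ext; first by congr (TT x _); rewrite /n; lia.
    exact: hx.
  by rewrite ltnS /n; lia.
rewrite (eq_bigr (fun k : 'I_n.+1 => 'C(n,k)%:R * (x * (1 - x ^+ k) / (1 - x) * TT x (n - k)))); last by move=> k _; rewrite !mulrA.
have h := sum_sub [set: E] (fun k => x * (1 - x ^+ k) / (1 - x) * TT x (n - k)).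
rewrite cardsT -/n in h.
rewrite -h big_mkcond /=; apply: eq_bigr => A _; by rewrite subsetT.
Qed.
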